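(* The set of natural numbers that occur exactly twice in $(a(n))_{n\ge 0}$ equals the set of natural numbers that are not of the form $\lfloor \varphi k+\tfrac12\rfloor$ for any integer $k\ge 0$ (i.e., the complement in $\mathbb{N}$ of $\{\lfloor \varphi k+\tfrac12\rfloor : k\ge 0\}$).
   Context: $\mathbb{N}=\{0,1,2,\ldots\}$, $\varphi=(1+\sqrt5)/2$. Let $(F_n)_{n\ge 0}$ be the Fibonacci numbers: $F_0=0$, $F_1=1$, $F_n=F_{n-1}+F_{n-2}$ for $n\ge 2$. Define $(a(n))_{n\ge 0}$ (OEIS A105774) by $a(0)=0$, $a(1)=1$, and for $n\ge 2$, $a(n)=F_{j+1}-a(n-F_j)$, where $j\ge 2$ is the unique index with $F_j<n\le F_{j+1}$. *)

(* Defs.v *)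
From Stdlib Require Import Reals ZArith Arith Lia.

Fixpoint fib (n : nat) : nat :=
  match n with
  | 0 => 0
  | S m => match m with
           | 0 => 1
           | S k => fib m + fib k
           end
  end.

Fixpoint jidx_aux (fuel j n : nat) : nat :=
  match fuel with
  | 0 => j
  | S f => if Nat.leb n (fib (S j)) then j else jidx_aux f (S j) n
  end.

Definition jidx (n : nat) : nat := jidx_aux n 2 n.

(* The recursion a(n) = F_{j+1} - a(n - F_j), with fuel (n - F_j < n since F_j >= 1).
   Values taken in Z so that the subtraction is the genuine integer one. *)
Fixpoint a_aux (fuel n : nat) : Z :=
  match fuel with
  | 0 => 0%Z
  | S f =>
      match n with
      | 0 => 0%Z
      | 1 => 1%Z
      | _ => let j := jidx n in
             (Z.of_nat (fib (S j)) - a_aux f (n - fib j))%Z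
      end
  end.

(* OEIS A105774. *)
Definition a (n : nat) : Z := a_aux n n.

Definition occurs_exactly_twice (m : nat) : Prop :=
  exists n1 n2 : nat, n1 <> n2 /\ a n1 = Z.of_nat m /\ a n2 = Z.of_nat m /\
    forall n : nat, a n = Z.of_nat m -> n = n1 \/ n = n2.

Definition phi : R := ((1 + sqrt 5) / 2)%R.

Definition is_floor_phi_half (m k : nat) : Prop :=
  (INR m <= phi * INR k + / 2 < INR m + 1)%R.

(* Main.v *)
Require Import Defs.
From Stdlib Require Import Reals ZArith.
From Stdlib Require Import Arith Lia Lra Psatz.

Close Scope Z_scope.

Lemma fib_SS n : fib (S (S n)) = fib (S n) + fib n.
Proof. reflexivity. Qed.

Lemma fib_le_S n : fib n <= fib (S n).
Proof. destruct n; [simpl; lia|]. rewrite fib_SS. lia. Qed.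

Lemma fib_mono i i' : i <= i' -> fib i <= fib i'.
Proof. induction 1; [lia|]. pose proof (fib_le_S m). lia. Qed.

Lemma fib_pos n : 1 <= n -> 1 <= fib n.
Proof. intros H. induction n; [lia|]. destruct n; [simpl; lia|].
  rewrite fib_SS. lia. Qed.

Lemma fib_lt_S i : 2 <= i -> fib i < fib (S i).
Proof. intros H. destruct i as [|[|i]]; try lia. rewrite (fib_SS (S i)).
  pose proof (fib_pos (S i)). lia. Qed.

Lemma fib_strict i i' : 2 <= i -> i < i' -> fib i < fib i'.
Proof. intros H H'. induction H'.
  - apply fib_lt_S; lia.
  - pose proof (fib_le_S m). lia. Qed.

Lemma fib_le_inv i i' : 2 <= i' -> fib i <= fib i' -> i <= i'.
Proof. intros H H'. destruct (le_lt_dec i i'); auto.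
  pose proof (fib_strict i' i H l). lia. Qed.

Lemma fib_lt_inv i i' : fib i < fib i' -> i < i'.
Proof. intros H. destruct (le_lt_dec i' i); auto.
  pose proof (fib_mono _ _ l). lia. Qed.

Lemma block_uniq j j' n : 2 <= j -> 2 <= j' ->
  fib j < n <= fib (S j) -> fib j' < n <= fib (S j') -> j = j'.
Proof. intros Hj Hj' H1 H2.
  destruct (lt_eq_lt_dec j j') as [[Hl|Hl]|Hl]; auto.
  - pose proof (fib_mono (S j) j' Hl). lia.
  - pose proof (fib_mono (S j') j Hl). lia. Qed.

Lemma vblock_uniq j j' v : 2 <= j -> 2 <= j' ->
  fib j <= v < fib (S j) -> fib j' <= v < fib (S j') -> j = j'.
Proof. intros Hj Hj' H1 H2.
  destruct (lt_eq_lt_dec j j') as [[Hl|Hl]|Hl]; auto.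
  - pose proof (fib_mono (S j) j' Hl). lia.
  - pose proof (fib_mono (S j') j Hl). lia. Qed.

Lemma fib_ge n : n + 1 <= fib (n + 3).
Proof. induction n; [simpl; lia|].
  replace (S n + 3) with (S (S (n+2))) by lia. rewrite fib_SS.
  replace (S (n+2)) with (n+3) by lia. pose proof (fib_pos (n+2)). lia. Qed.

Lemma jidx_aux_spec f j n : fib j < n -> n <= fib (S (j + f)) ->
  j <= jidx_aux f j n /\ fib (jidx_aux f j n) < n <= fib (S (jidx_aux f j n)).
Proof. revert j. induction f; intros j H1 H2.
  - rewrite Nat.add_0_r in H2. cbn [jidx_aux]. lia.
  - cbn [jidx_aux]. destruct (Nat.leb n (fib (S j))) eqn:E.
    + apply Nat.leb_le in E. lia.
    + apply Nat.leb_gt in E. destruct (IHf (S j)) as [A B]; auto.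
      rewrite Nat.add_succ_r in H2. exact H2. lia. Qed.

Lemma jidx_spec n : 2 <= n -> 2 <= jidx n /\ fib (jidx n) < n <= fib (S (jidx n)).
Proof. intros H. unfold jidx. apply jidx_aux_spec.
  simpl. lia. pose proof (fib_ge n). replace (S (2+n)) with (n+3) by lia. lia. Qed.

Lemma jidx_eq n j : 2 <= j -> fib j < n <= fib (S j) -> jidx n = j.
Proof. intros Hj H. assert (2 <= n). { pose proof (fib_pos j). lia. }
  destruct (jidx_spec n H0). eapply block_uniq; eauto. Qed.

Lemma a_aux_stable f1 f2 n : n <= f1 -> n <= f2 -> a_aux f1 n = a_aux f2 n.
Proof. revert f2 n. induction f1; intros f2 n H1 H2.
  - assert (n = 0) by lia. subst. destruct f2; reflexivity.
  - destruct f2. { assert (n = 0) by lia. subst. reflexivity. }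
    simpl. destruct n as [|[|n]]; try reflexivity.
    f_equal. apply IHf1.
    + destruct (jidx_spec (S (S n))) as [A B]; try lia.
      pose proof (fib_pos (jidx (S (S n)))). lia.
    + destruct (jidx_spec (S (S n))) as [A B]; try lia.
      pose proof (fib_pos (jidx (S (S n)))). lia. Qed.

Lemma a_rec n j : 2 <= j -> fib j < n <= fib (S j) ->
  a n = (Z.of_nat (fib (S j)) - a (n - fib j))%Z.
Proof. intros Hj H. assert (2 <= n). { pose proof (fib_pos j). lia. }
  pose proof (jidx_eq n j Hj H) as E.
  destruct n as [|[|n]]; try lia.
  assert (Hu: a (S (S n)) = (Z.of_nat (fib (S (jidx (S (S n))))) - a_aux (S n) (S (S n) - fib (jidx (S (S n)))))%Z) by reflexivity.
  rewrite Hu, E. f_equal. unfold a. apply a_aux_stable.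
  pose proof (fib_pos j). lia. lia. Qed.

Lemma a0 : a 0 = 0%Z. Proof. reflexivity. Qed.
Lemma a1 : a 1 = 1%Z. Proof. reflexivity. Qed.

Close Scope Z_scope.

Lemma vb n : 2 <= n -> forall j, 2 <= j -> fib j < n <= fib (S j) ->
  (Z.of_nat (fib j) <= a n < Z.of_nat (fib (S j)))%Z.
Proof.
  induction n as [n IH] using lt_wf_ind. intros Hn j Hj Hb.
  rewrite (a_rec n j Hj Hb).
  destruct j as [|j1]; [lia|].
  assert (HF: fib (S (S j1)) = fib (S j1) + fib j1) by reflexivity.
  set (i := n - fib (S j1)).
  assert (Hi: 1 <= i <= fib j1) by (unfold i; lia).
  assert (Hj1 : 1 <= fib j1) by (apply fib_pos; lia).
  assert (1 <= a i <= Z.of_nat (fib j1))%Z.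
  { destruct (Nat.eq_dec i 1) as [E|E].
    - rewrite E, a1. lia.
    - destruct (jidx_spec i) as [A B]; [lia|].
      assert (fib (jidx i) < fib j1) by lia.
      apply fib_lt_inv in H.
      pose proof (fib_mono (S (jidx i)) j1 H).
      pose proof (fib_pos (jidx i)).
      assert (i < n) by (unfold i; pose proof (fib_pos (S j1)); lia).
      specialize (IH i H2 ltac:(lia) (jidx i) A B). lia. }
  rewrite HF. lia.
Qed.

Lemma a_ge1 n : 1 <= n -> (1 <= a n)%Z.
Proof. intros H. destruct (Nat.eq_dec n 1) as [E|E]. subst; rewrite a1; lia.
  destruct (jidx_spec n) as [A B]; [lia|]. pose proof (vb n ltac:(lia) _ A B).
  pose proof (fib_pos (jidx n)). lia. Qed.

Lemma occ_block n v j : 2 <= n -> a n = Z.of_nat v -> 2 <= j ->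
  fib j <= v < fib (S j) -> fib j < n <= fib (S j).
Proof. intros Hn Ha Hj Hv. destruct (jidx_spec n Hn) as [A B].
  pose proof (vb n Hn _ A B). rewrite Ha in H.
  assert (jidx n = j). { apply (vblock_uniq _ _ v); auto; lia. }
  subst; auto. Qed.

Lemma occ_a j m n : 3 <= j -> fib j <= m < fib (S j) -> a n = Z.of_nat m ->
  fib j < n <= fib (S j) /\ a (n - fib j) = Z.of_nat (fib (S j) - m).
Proof. intros Hj Hm Ha.
  assert (2 <= fib j) by (apply (fib_mono 3 j) in Hj; simpl in Hj; lia).
  assert (2 <= n). { destruct (Nat.eq_dec n 0). subst; rewrite a0 in Ha; lia.
    destruct (Nat.eq_dec n 1). subst; rewrite a1 in Ha; lia. lia. }
  assert (Hb: fib j < n <= fib (S j)) by (apply (occ_block n m); auto; lia).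
  split; auto. rewrite (a_rec n j) in Ha by (auto; lia). lia. Qed.

Lemma occ_b j m n : 3 <= j -> fib j <= m < fib (S j) -> fib j < n <= fib (S j) ->
  a (n - fib j) = Z.of_nat (fib (S j) - m) -> a n = Z.of_nat m.
Proof. intros Hj Hm Hb Ha. rewrite (a_rec n j) by (auto; lia). lia. Qed.

Lemma occ_c j1 m' i : 2 <= j1 -> 1 <= m' < fib j1 -> a i = Z.of_nat m' -> 1 <= i <= fib j1.
Proof. intros Hj Hm Ha.
  destruct (Nat.eq_dec i 0). subst; rewrite a0 in Ha; lia.
  destruct (Nat.eq_dec i 1). subst; pose proof (fib_pos j1); lia.
  destruct (jidx_spec i) as [A B]; [lia|].
  pose proof (vb i ltac:(lia) _ A B). rewrite Ha in H.
  assert (fib (jidx i) < fib j1) by lia. apply fib_lt_inv in H0.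
  pose proof (fib_mono _ _ H0). lia. Qed.

Lemma no_occ_fib j n : 4 <= j -> a n <> Z.of_nat (fib j).
Proof. intros Hj Ha. destruct j as [|j1]; [lia|].
  assert (HF: fib (S (S j1)) = fib (S j1) + fib j1) by reflexivity.
  assert (Hr: fib (S j1) <= fib (S j1) < fib (S (S j1))) by (split; [lia|]; apply fib_lt_S; lia).
  destruct (occ_a (S j1) (fib (S j1)) n ltac:(lia) Hr Ha) as [Hb Hi].
  rewrite HF in Hi. replace (fib (S j1) + fib j1 - fib (S j1)) with (fib j1) in Hi by lia.
  set (i := n - fib (S j1)) in *.
  assert (3 <= j1) by lia.
  assert (2 <= fib j1) by (apply (fib_mono 3 j1) in H; simpl in H; lia).
  destruct (Nat.eq_dec i 1) as [E|E]. rewrite E, a1 in Hi. lia.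
  destruct (jidx_spec i) as [A B]; [unfold i in *; lia|].
  pose proof (vb i ltac:(unfold i in *; lia) _ A B). rewrite Hi in H1.
  assert (jidx i = j1). { apply (vblock_uniq _ _ (fib j1)); try lia.
    split; [lia|]. apply fib_lt_S; lia. }
  rewrite H2 in B. unfold i in B. lia. Qed.

Definition ET (P : nat -> Prop) : Prop :=
  exists n1 n2 : nat, n1 <> n2 /\ P n1 /\ P n2 /\ forall n, P n -> n = n1 \/ n = n2.

Lemma ET_eq m : occurs_exactly_twice m <-> ET (fun n => a n = Z.of_nat m).
Proof. reflexivity. Qed.

Lemma ET_transfer (P Q : nat -> Prop) (f g : nat -> nat) :
  (forall n, P n -> Q (f n)) -> (forall i, Q i -> P (g i)) ->
  (forall n, P n -> g (f n) = n) -> (forall i, Q i -> f (g i) = i) ->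
  ET P -> ET Q.
Proof. intros H1 H2 H3 H4 [n1 [n2 [Hne [P1 [P2 Hall]]]]].
  exists (f n1), (f n2). repeat split; auto.
  - intro E. apply Hne. rewrite <- (H3 n1 P1), <- (H3 n2 P2), E. reflexivity.
  - intros i Qi. destruct (Hall (g i) (H2 i Qi)) as [E|E].
    + left. rewrite <- E, H4; auto.
    + right. rewrite <- E, H4; auto. Qed.

Lemma ET_none (P : nat -> Prop) : (forall n, ~ P n) -> ~ ET P.
Proof. intros H [n1 [n2 [_ [P1 _]]]]. exact (H n1 P1). Qed.

Lemma ET_reflect j m : 5 <= j -> fib j <= m < fib (S j) ->
  (occurs_exactly_twice m <-> occurs_exactly_twice (fib (S j) - m)).
Proof. intros Hj Hm. destruct j as [|j1]; [lia|].
  assert (HF: fib (S (S j1)) = fib (S j1) + fib j1) by reflexivity.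
  destruct (Nat.eq_dec m (fib (S j1))) as [E|E].
  - subst m. rewrite HF. replace (fib (S j1) + fib j1 - fib (S j1)) with (fib j1) by lia.
    split; intro H; exfalso; revert H; apply ET_none; intro n; apply no_occ_fib; lia.
  - assert (2 <= j1) by lia.
    assert (Hm' : 1 <= fib (S (S j1)) - m < fib j1) by lia.
    split.
    + apply ET_transfer with (f := fun n => n - fib (S j1)) (g := fun i => i + fib (S j1)).
      * intros n Hn. apply (occ_a (S j1) m n); auto; lia.
      * intros i Hi. pose proof (occ_c j1 _ i H Hm' Hi).
        apply (occ_b (S j1)); try lia. replace (i + fib (S j1) - fib (S j1)) with i by lia. auto.
      * intros n Hn. pose proof (occ_a (S j1) m n ltac:(lia) Hm Hn). lia.
      * intros i Hi. lia.
    + apply ET_transfer with (g := fun n => n - fib (S j1)) (f := fun i => i + fib (S j1)).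
      * intros i Hi. pose proof (occ_c j1 _ i H Hm' Hi).
        apply (occ_b (S j1)); try lia. replace (i + fib (S j1) - fib (S j1)) with i by lia. auto.
      * intros n Hn. apply (occ_a (S j1) m n); auto; lia.
      * intros i Hi. lia.
      * intros n Hn. pose proof (occ_a (S j1) m n ltac:(lia) Hm Hn). lia.
Qed.

Close Scope Z_scope.

Lemma ET_single (P : nat -> Prop) n0 : (forall n, P n -> n = n0) -> ~ ET P.
Proof. intros H [n1 [n2 [Hne [P1 [P2 _]]]]]. apply H in P1. apply H in P2. congruence. Qed.

Lemma base0 : ~ occurs_exactly_twice 0.
Proof. apply (ET_single _ 0). intros n Hn. destruct n; auto.
  pose proof (a_ge1 (S n)). lia. Qed.

Lemma base1 : occurs_exactly_twice 1.
Proof. exists 1, 2. split; [lia|]. split; [reflexivity|]. split; [reflexivity|].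
  intros n Hn. destruct n as [|[|[|n]]]; auto; try (rewrite a0 in Hn; lia).
  destruct (jidx_spec (S (S (S n)))) as [A B]; [lia|].
  pose proof (vb (S (S (S n))) ltac:(lia) _ A B).
  assert (3 <= jidx (S (S (S n)))).
  { destruct (Nat.eq_dec (jidx (S (S (S n)))) 2) as [E|E]; [rewrite E in B; simpl in B; lia|lia]. }
  pose proof (fib_mono 3 _ H0). change (fib 3) with 2 in H1. lia. Qed.

Lemma base2 : ~ occurs_exactly_twice 2.
Proof. apply (ET_single _ 3). intros n Hn.
  destruct (occ_a 3 2 n ltac:(lia) ltac:(simpl; lia) Hn). simpl in H. lia. Qed.

Lemma base3 : ~ occurs_exactly_twice 3.
Proof. apply ET_none. intros n. apply (no_occ_fib 4 n). lia. Qed.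

Lemma base4 : occurs_exactly_twice 4.
Proof. exists 4, 5. split; [lia|]. split; [reflexivity|]. split; [reflexivity|].
  intros n Hn. destruct (occ_a 4 4 n ltac:(lia) ltac:(simpl; lia) Hn). simpl in H. lia. Qed.

Close Scope Z_scope.
Open Scope Z_scope.

Definition fz (n : nat) : Z := Z.of_nat (fib n).

Lemma fz_SS n : fz (S (S n)) = fz (S n) + fz n.
Proof. unfold fz. rewrite fib_SS. lia. Qed.

Definition Qf (n : nat) : Z := fz (S n) * fz (S n) - fz (S n) * fz n - fz n * fz n.

Lemma Qf_S n : Qf (S n) = - Qf n.
Proof. unfold Qf. rewrite fz_SS. ring. Qed.

Lemma Qf_sq n : Qf n = 1 \/ Qf n = -1.
Proof. induction n. left; reflexivity. rewrite Qf_S. lia. Qed.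

Lemma CL (N : nat) : forall u v, (Z.to_nat u <= N)%nat -> 0 <= v -> 0 < u ->
  (u*u - u*v - v*v = 1 \/ u*u - u*v - v*v = -1) ->
  exists n, u = fz (S n) /\ v = fz n.
Proof.
  induction N; intros u v HN Hv Hu H.
  - lia.
  - destruct (Z.eq_dec v 0) as [E|E].
    + subst. assert (u = 1) by nia. subst. exists 0%nat. split; reflexivity.
    + destruct (Z.lt_trichotomy v u) as [Hl|[Hl|Hl]].
      * assert (Hq: v*v - v*(u-v) - (u-v)*(u-v) = -(u*u - u*v - v*v)) by ring.
        destruct (IHN v (u - v)) as [n [E1 E2]]; try lia.
        exists (S n). rewrite fz_SS. lia.
      * subst. assert (u = 1) by nia. subst. exists 1%nat. split; reflexivity.
      * exfalso. nia.
Qed.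

Lemma sq_mod5 (x : Z) : exists c r, x = 5*c + r /\ (r = 0 \/ r = 1 \/ r = 2 \/ r = 3 \/ r = 4).
Proof. exists (x / 5), (x mod 5). split. apply Z.div_mod; lia.
  pose proof (Z.mod_pos_bound x 5). lia. Qed.

Lemma Dform t q : let z := 2*t+1 in let A := z + 4*q in
  exists w, A*A - 5*z*z = 4*w /\ (w = 1 \/ w = -1 \/ 5 <= w \/ w <= -5).
Proof. intros z A. exists (4*q*q + 2*q*z - z*z). split. unfold A; ring.
  assert (Hodd: exists e, 4*q*q + 2*q*z - z*z = 2*e + 1) by
    (exists (2*q*q + q*z - 2*t*t - 2*t - 1); unfold z; ring).
  destruct Hodd as [e He].
  destruct (sq_mod5 (z - q)) as [c [r [Hc Hr]]].
  assert (Hw: 4*q*q + 2*q*z - z*z = 5*(q*q - 5*c*c - 2*c*r) - r*r).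
  { replace (4*q*q + 2*q*z - z*z) with (5*q*q - (z-q)*(z-q)) by ring. rewrite Hc. ring. }
  rewrite He in *.
  destruct Hr as [R|[R|[R|[R|R]]]]; subst r; lia.
Qed.

Close Scope Z_scope.
Open Scope Z_scope.

Definition s5 : R := sqrt 5.
Lemma s5_sq : (s5 * s5 = 5)%R.
Proof. unfold s5. apply sqrt_sqrt. lra. Qed.
Lemma s5_bounds : (2.23 < s5 < 2.24)%R.
Proof. pose proof s5_sq. assert (0 <= s5)%R by (unfold s5; apply sqrt_pos). nra. Qed.

Lemma fz_mono i i' : (i <= i')%nat -> fz i <= fz i'.
Proof. intros H. unfold fz. apply fib_mono in H. lia. Qed.

Lemma fz_lt_inv i i' : fz i < fz i' -> (i < i')%nat.
Proof. unfold fz. intros. apply fib_lt_inv. lia. Qed.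

Lemma fz_ge2 j : (3 <= j)%nat -> 2 <= fz j.
Proof. intros H. apply (fz_mono 3 j) in H. exact H. Qed.

Lemma range_n j n : (5 <= j)%nat -> 2 * fz j - 1 <= fz n <= 2 * fz (S j) - 1 -> n = (j + 2)%nat.
Proof. intros Hj H. destruct j as [|[|j2]]; try lia.
  pose proof (fz_SS j2). pose proof (fz_SS (S j2)). pose proof (fz_SS (S (S j2))).
  pose proof (fz_SS (S (S (S j2)))). pose proof (fz_ge2 j2 ltac:(lia)).
  assert (fz (S (S (S j2))) < fz n) by lia. apply fz_lt_inv in H5.
  assert (fz n < fz (S (S (S (S (S j2)))))) by lia. apply fz_lt_inv in H6. lia. Qed.

Lemma LF j : (2 * fz j + fz (S j))*(2 * fz j + fz (S j)) - 5*fz (S j)*fz (S j) = 4 * Qf (S j).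
Proof. unfold Qf. rewrite fz_SS. ring. Qed.

Lemma fib_case j t q w : (5 <= j)%nat ->
  let z := 2*t+1 in let A := z + 4*q in
  2 * fz j - 1 <= z <= 2 * fz (S j) - 1 ->
  A*A - 5*z*z = 4*w -> (w = 1 \/ w = -1) -> 0 < A ->
  w = - Qf (S j).
Proof. intros Hj z A Hz HD Hw HA.
  set (u := z + 2*q).
  assert (Hu: u*u - u*z - z*z = w).
  { assert (4*(u*u - u*z - z*z) = A*A - 5*z*z) by (unfold u, A; ring). lia. }
  assert (Hz0 : 0 <= z). { pose proof (fz_ge2 j ltac:(lia)). lia. }
  destruct (CL (Z.to_nat u) u z ltac:(lia) Hz0 ltac:(unfold u, A in *; lia) ltac:(lia))
    as [n [E1 E2]].
  assert (n = (j+2)%nat) by (apply range_n; auto; lia). subst n.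
  assert (Qf (j+2) = w) by (unfold Qf; rewrite <- E1, <- E2; lia).
  replace (j+2)%nat with (S (S j)) in H by lia. rewrite Qf_S in H. lia. Qed.

Lemma real_sq_pos (x y : Z) : (0 < IZR x)%R -> (IZR y * s5 < IZR x)%R -> (0 <= IZR y)%R -> 5*y*y < x*x.
Proof. intros H1 H2 H3. apply lt_IZR. rewrite !mult_IZR. pose proof s5_sq. pose proof s5_bounds.
  replace (IZR 5) with (s5*s5)%R by (rewrite H; reflexivity).
  assert (0 <= IZR y * s5)%R by nra.
  assert (0 < (IZR x - IZR y * s5) * (IZR x + IZR y * s5))%R by (apply Rmult_lt_0_compat; lra).
  nra. Qed.

Lemma real_sq_neg (x y : Z) : (0 < IZR x)%R -> (IZR x < IZR y * s5)%R -> x*x < 5*y*y.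
Proof. intros H1 H2. apply lt_IZR. rewrite !mult_IZR. pose proof s5_sq. pose proof s5_bounds.
  replace (IZR 5) with (s5*s5)%R by (rewrite H; reflexivity).
  assert (0 < (IZR y * s5 - IZR x) * (IZR y * s5 + IZR x))%R by (apply Rmult_lt_0_compat; lra).
  nra. Qed.

Lemma K1 j t q : (5 <= j)%nat ->
  let z := 2*t+1 in let A := z + 4*q in
  let F := fz (S j) in let L := 2 * fz j + fz (S j) in
  2 * fz j - 1 <= z <= 2 * fz (S j) - 1 ->
  (IZR z * s5 < IZR A)%R ->
  (2 * IZR L - 2 * IZR F * s5 < IZR A - IZR z * s5)%R.
Proof.
  intros Hj z A F L Hz HA.
  pose proof s5_sq as Hs. pose proof s5_bounds as Hsb.
  assert (HLF: L*L - 5*F*F = 4*Qf (S j)) by (unfold L, F; apply LF).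
  assert (HF8 : 8 <= F).
  { unfold F. pose proof (fz_mono 6 (S j) ltac:(lia)) as H6. change (fz 6) with 8 in H6. lia. }
  assert (HL0 : 0 <= L) by (unfold L, fz; lia).
  assert (Hz1 : 1 <= z) by (pose proof (fz_ge2 j ltac:(lia)); lia).
  assert (HFr : (8 <= IZR F)%R) by (apply IZR_le; lia).
  assert (HLr : (0 <= IZR L)%R) by (apply IZR_le; lia).
  assert (Hzr : (1 <= IZR z)%R) by (apply IZR_le; lia).
  assert (Hzr2 : (IZR z <= 2 * IZR F - 1)%R).
  { replace 2%R with (IZR 2) by reflexivity. rewrite <- mult_IZR, <- minus_IZR. apply IZR_le. lia. }
  assert (HLFr : (IZR L * IZR L - s5*s5 * IZR F * IZR F = 4 * IZR (Qf (S j)))%R).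
  { rewrite Hs. rewrite <- !mult_IZR, <- minus_IZR. f_equal. lia. }
  destruct (Qf_sq (S j)) as [Q|Q]; rewrite Q in HLFr.
  -
    destruct (Dform t q) as [w [HD Hw]]. fold z A in HD.
    assert (HA0 : (0 < IZR A)%R) by nra.
    assert (HDp : 5*z*z < A*A) by (apply real_sq_pos; lra).
    assert (Hw1 : w = 1 \/ 5 <= w) by lia.
    destruct Hw1 as [W|W].
    + exfalso. assert (HA0' : 0 < A) by (apply lt_IZR; lra).
      pose proof (fib_case j t q w Hj Hz HD (or_introl W) HA0') as FC. lia.
    + assert (HLgt : (IZR F * s5 < IZR L)%R) by nra.
      set (d := (2 * IZR L - 2 * IZR F * s5)%R).
      assert (Hd8 : (d * (IZR L + IZR F * s5) = 8)%R) by (unfold d; nra).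
      assert (Hd0 : (0 < d)%R) by (unfold d; lra).
      assert (HLs : (17 < IZR L + IZR F * s5)%R) by nra.
      assert (Hd1 : (d < 1)%R).
      { destruct (Rlt_or_le d 1) as [Hl|Hl]; auto.
        assert (1 * (IZR L + IZR F * s5) <= d * (IZR L + IZR F * s5))%R by (apply Rmult_le_compat_r; lra).
        lra. }
      set (e := (IZR A - IZR z * s5)%R).
      assert (He0 : (0 < e)%R) by (unfold e; lra).
      assert (HD' : (e * (2 * IZR z * s5 + e) = 4 * IZR w)%R).
      { unfold e. replace (4 * IZR w)%R with (IZR (A*A - 5*z*z)) by (rewrite HD; rewrite mult_IZR; reflexivity).
        rewrite minus_IZR, !mult_IZR. replace (IZR 5) with (s5*s5)%R by (rewrite Hs; reflexivity). ring. }
      assert (HW20 : (20 <= 4 * IZR w)%R) by (apply IZR_le in W; lra).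
      destruct (Rle_or_lt e d) as [Hed|Hed]; [|exact Hed]. exfalso.
      assert (Hc : (0 <= 2 * IZR z * s5)%R) by nra.
      assert (H1 : (e * (2 * IZR z * s5 + e) <= d * (2 * IZR z * s5 + d))%R).
      { apply Rle_trans with (d * (2 * IZR z * s5 + e))%R.
        apply Rmult_le_compat_r; lra. apply Rmult_le_compat_l; lra. }
      assert (Hzs : (IZR z * s5 <= (2 * IZR F - 1) * s5)%R) by (apply Rmult_le_compat_r; lra).
      assert (H2 : (d * (2 * IZR z * s5) <= d * (2 * (IZR L + IZR F * s5)))%R).
      { apply Rmult_le_compat_l; lra. }
      assert (Hdd : (d * d < 1)%R) by (apply Rle_lt_trans with (d * 1)%R; [apply Rmult_le_compat_l; lra|lra]).
      assert (E1 : (d * (2 * IZR z * s5 + d) = d * (2 * IZR z * s5) + d * d)%R) by ring.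
      assert (E2 : (d * (2 * (IZR L + IZR F * s5)) = 16)%R) by lra.
      lra.
  -
    assert (HLlt : (IZR L < IZR F * s5)%R).
    { destruct (Rlt_or_le (IZR L) (IZR F * s5)) as [Hl|Hl]; auto.
      assert ((IZR F * s5) * (IZR F * s5) <= IZR L * IZR L)%R by (apply Rmult_le_compat; nra).
      assert (E : ((IZR F * s5) * (IZR F * s5) = s5 * s5 * IZR F * IZR F)%R) by ring.
      lra. }
    lra.
Qed.

Lemma K2 j t q : (5 <= j)%nat ->
  let z := 2*t+1 in let A := z + 4*q in
  let F := fz (S j) in let L := 2 * fz j + fz (S j) in
  2 * fz j - 1 <= z <= 2 * fz (S j) - 1 ->
  (IZR A < IZR z * s5)%R ->
  (2 * IZR F * s5 - 2 * IZR L < IZR z * s5 - IZR A)%R.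
Proof.
  intros Hj z A F L Hz HA.
  pose proof s5_sq as Hs. pose proof s5_bounds as Hsb.
  assert (HLF: L*L - 5*F*F = 4*Qf (S j)) by (unfold L, F; apply LF).
  assert (HF8 : 8 <= F).
  { unfold F. pose proof (fz_mono 6 (S j) ltac:(lia)) as H6. change (fz 6) with 8 in H6. lia. }
  assert (HL0 : 0 <= L) by (unfold L, fz; lia).
  assert (Hz1 : 1 <= z) by (pose proof (fz_ge2 j ltac:(lia)); lia).
  assert (HFr : (8 <= IZR F)%R) by (apply IZR_le; lia).
  assert (HLr : (0 <= IZR L)%R) by (apply IZR_le; lia).
  assert (Hzr : (1 <= IZR z)%R) by (apply IZR_le; lia).
  assert (Hzr2 : (IZR z <= 2 * IZR F - 1)%R).
  { replace 2%R with (IZR 2) by reflexivity. rewrite <- mult_IZR, <- minus_IZR. apply IZR_le. lia. }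
  assert (HLFr : (IZR L * IZR L - s5*s5 * IZR F * IZR F = 4 * IZR (Qf (S j)))%R).
  { rewrite Hs. rewrite <- !mult_IZR, <- minus_IZR. f_equal. lia. }
  assert (EF : ((IZR F * s5) * (IZR F * s5) = s5 * s5 * IZR F * IZR F)%R) by ring.
  destruct (Qf_sq (S j)) as [Q|Q]; rewrite Q in HLFr.
  - assert (HLgt : (IZR F * s5 < IZR L)%R).
    { destruct (Rlt_or_le (IZR F * s5) (IZR L)) as [Hl|Hl]; auto.
      assert (IZR L * IZR L <= (IZR F * s5) * (IZR F * s5))%R by (apply Rmult_le_compat; nra).
      lra. }
    lra.
  - set (d := (2 * IZR F * s5 - 2 * IZR L)%R).
    assert (Hd8 : (d * (IZR L + IZR F * s5) = 8)%R) by (unfold d; nra).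
    assert (HLge : (IZR F * s5 - 1 <= IZR L)%R).
    { destruct (Rlt_or_le (IZR L) (IZR F * s5 - 1)) as [Hl|Hl]; auto.
      assert (IZR L * IZR L <= (IZR F * s5 - 1) * (IZR F * s5 - 1))%R by (apply Rmult_le_compat; nra).
      nra. }
    assert (HLs : (17 < IZR L + IZR F * s5)%R) by nra.
    assert (Hd0 : (0 < d)%R).
    { destruct (Rlt_or_le 0 d) as [Hl|Hl]; auto.
      assert (d * (IZR L + IZR F * s5) <= 0 * (IZR L + IZR F * s5))%R by (apply Rmult_le_compat_r; lra).
      lra. }
    assert (Hd1 : (d < 1)%R).
    { destruct (Rlt_or_le d 1) as [Hl|Hl]; auto.
      assert (1 * (IZR L + IZR F * s5) <= d * (IZR L + IZR F * s5))%R by (apply Rmult_le_compat_r; lra).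
      lra. }
    set (e := (IZR z * s5 - IZR A)%R).
    destruct (Rle_or_lt e d) as [Hed|Hed]; [|exact Hed]. exfalso.
    assert (Hzs0 : (s5 <= IZR z * s5)%R) by nra.
    destruct (Rle_or_lt (IZR A) 0) as [HA0|HA0].
    + unfold e in Hed. lra.
    + destruct (Dform t q) as [w [HD Hw]]. fold z A in HD.
      assert (HDn : A*A < 5*z*z) by (apply real_sq_neg; lra).
      assert (Hw1 : w = -1 \/ w <= -5) by lia.
      destruct Hw1 as [W|W].
      * assert (HA0' : 0 < A) by (apply lt_IZR; lra).
        pose proof (fib_case j t q w Hj Hz HD (or_intror W) HA0') as FC. lia.
      * assert (He0 : (0 < e)%R) by (unfold e; lra).
        assert (HD' : (e * (2 * IZR z * s5 - e) = - 4 * IZR w)%R).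
        { unfold e. replace (- 4 * IZR w)%R with (- IZR (A*A - 5*z*z))%R by (rewrite HD; rewrite mult_IZR; ring).
          rewrite minus_IZR, !mult_IZR. replace (IZR 5) with (s5*s5)%R by (rewrite Hs; reflexivity). ring. }
        assert (HW20 : (20 <= - 4 * IZR w)%R) by (apply IZR_le in W; lra).
        assert (H1 : (e * (2 * IZR z * s5 - e) <= d * (2 * IZR z * s5))%R).
        { assert (e * (2 * IZR z * s5 - e) <= e * (2 * IZR z * s5))%R by nra.
          assert (e * (2 * IZR z * s5) <= d * (2 * IZR z * s5))%R by (apply Rmult_le_compat_r; lra).
          lra. }
        assert (Hzs : (IZR z * s5 <= (2 * IZR F - 1) * s5)%R) by (apply Rmult_le_compat_r; lra).
        assert (H2 : (d * (2 * IZR z * s5) <= d * (2 * (IZR L + IZR F * s5)))%R).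
        { apply Rmult_le_compat_l; lra. }
        lra.
Qed.

Close Scope Z_scope.
Open Scope Z_scope.

Definition InS (m : Z) : Prop := exists k : Z,
  (IZR (2*m-1) * s5 < IZR (4*k + (2*m-1)))%R /\ (IZR (4*k + (2*m+1)) < IZR (2*m+1) * s5)%R.
Definition NotS (m : Z) : Prop := exists p : Z,
  (IZR (4*p + (2*m-1)) < IZR (2*m-1) * s5)%R /\ (IZR (2*m+1) * s5 < IZR (4*p + 4 + (2*m+1)))%R.

Lemma no_sq t A : A*A <> 5*(2*t+1)*(2*t+1).
Proof. intro H. destruct (Z.Even_or_Odd A) as [[b Hb]|[b Hb]]; subst A.
  - lia.
  - destruct (Z.Even_or_Odd b) as [[c Hc]|[c Hc]]; destruct (Z.Even_or_Odd t) as [[d Hd]|[d Hd]]; subst; nia. Qed.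

Lemma irr t A : IZR A <> (IZR (2*t+1) * s5)%R.
Proof. intro H. apply (no_sq t A). apply eq_IZR. rewrite !mult_IZR.
  rewrite H. pose proof s5_sq.
  replace (IZR 5) with (s5*s5)%R by (rewrite H0; reflexivity). ring. Qed.

Lemma excl m : InS m -> NotS m -> False.
Proof. intros [k [H1 H2]] [p [H3 H4]].
  assert (4*p + (2*m-1) < 4*k + (2*m-1)) by (apply lt_IZR; lra).
  assert (IZR (4*p + 4 + (2*m+1)) <= IZR (4*k + (2*m+1)))%R by (apply IZR_le; lia).
  lra. Qed.

Lemma InS_or_NotS m : InS m \/ NotS m.
Proof.
  set (x := 2*m-1). set (y := 2*m+1).
  set (t := ((IZR x * s5 - IZR x) / 4)%R).
  destruct (archimed t) as [U1 U2].
  set (p := up t - 1).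
  assert (Hp1 : (IZR p <= t)%R) by (unfold p; rewrite minus_IZR; lra).
  assert (Hp2 : (t < IZR p + 1)%R) by (unfold p; rewrite minus_IZR; lra).
  assert (Ex : x = 2*(m-1)+1) by (unfold x; ring).
  assert (Ey : y = 2*m+1) by reflexivity.
  assert (A1 : (IZR (4*p + x) < IZR x * s5)%R).
  { assert (IZR (4*p+x) <= IZR x * s5)%R.
    { rewrite plus_IZR, mult_IZR. unfold t in Hp1. lra. }
    destruct H; auto. exfalso. rewrite Ex in H. apply (irr (m-1) _ H). }
  assert (A2 : (IZR x * s5 < IZR (4*p + 4 + x))%R).
  { rewrite !plus_IZR, mult_IZR. unfold t in Hp2. lra. }
  destruct (Rlt_or_le (IZR y * s5) (IZR (4*p+4+y))) as [B|B].
  - right. exists p. split; auto.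
  - left. exists (p+1). split.
    + replace (4*(p+1) + (2*m-1)) with (4*p+4+x) by (unfold x; ring). auto.
    + replace (4*(p+1) + (2*m+1)) with (4*p+4+y) by (unfold y; ring).
      destruct B; auto. exfalso. apply (irr m _ H).
Qed.

Ltac zr := repeat rewrite ?plus_IZR, ?minus_IZR, ?mult_IZR, ?opp_IZR in *.

Lemma NotS_reflect j (M : Z) : (5 <= j)%nat -> fz j <= M < fz (S j) ->
  NotS M -> NotS (fz (S j) - M).
Proof. intros Hj HM [p [H1 H2]].
  pose proof (K1 j M (p+1) Hj) as k1. pose proof (K2 j (M-1) p Hj) as k2.
  cbv zeta in k1, k2.
  exists (fz j - 1 - p).
  assert (R1 : 2 * fz j - 1 <= 2*M+1 <= 2 * fz (S j) - 1) by lia.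
  assert (R2 : 2 * fz j - 1 <= 2*(M-1)+1 <= 2 * fz (S j) - 1) by lia.
  specialize (k1 R1). specialize (k2 R2).
  replace (2*(M-1)+1) with (2*M-1) in k2 by ring.
  replace (2*M-1+4*p) with (4*p+(2*M-1)) in k2 by ring.
  replace (2*M+1+4*(p+1)) with (4*p+4+(2*M+1)) in k1 by ring.
  specialize (k1 H2). specialize (k2 H1).
  zr. split; nra.
Qed.

Lemma InS_reflect j (M : Z) : (5 <= j)%nat -> fz j <= M < fz (S j) ->
  InS M -> InS (fz (S j) - M).
Proof. intros Hj HM [k [H1 H2]].
  pose proof (K1 j (M-1) k Hj) as k1. pose proof (K2 j M k Hj) as k2.
  cbv zeta in k1, k2.
  exists (fz j - k).
  assert (R1 : 2 * fz j - 1 <= 2*M+1 <= 2 * fz (S j) - 1) by lia.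
  assert (R2 : 2 * fz j - 1 <= 2*(M-1)+1 <= 2 * fz (S j) - 1) by lia.
  specialize (k2 R1). specialize (k1 R2).
  replace (2*(M-1)+1) with (2*M-1) in k1 by ring.
  replace (2*M-1+4*k) with (4*k+(2*M-1)) in k1 by ring.
  replace (2*M+1+4*k) with (4*k+(2*M+1)) in k2 by ring.
  specialize (k1 H1). specialize (k2 H2).
  zr. split; nra.
Qed.

Lemma RS j (m : nat) : (5 <= j)%nat -> (fib j <= m < fib (S j))%nat ->
  (InS (Z.of_nat m) <-> InS (Z.of_nat (fib (S j) - m))).
Proof. intros Hj Hm.
  assert (HM : fz j <= Z.of_nat m < fz (S j)) by (unfold fz; lia).
  assert (E : Z.of_nat (fib (S j) - m) = fz (S j) - Z.of_nat m) by (unfold fz; lia).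
  rewrite E. split.
  - apply InS_reflect; auto.
  - intros H. destruct (InS_or_NotS (Z.of_nat m)) as [H'|H']; auto.
    exfalso. apply (excl _ H). apply NotS_reflect; auto.
Qed.

Close Scope Z_scope.
Open Scope Z_scope.

Lemma real_conv (m : nat) : (exists k : nat, is_floor_phi_half m k) <-> InS (Z.of_nat m).
Proof.
  pose proof s5_sq as Hs. pose proof s5_bounds as Hsb.
  unfold is_floor_phi_half, phi. fold s5. split.
  - intros [k [H1 H2]]. exists (Z.of_nat k).
    rewrite !INR_IZR_INZ in *. set (M := Z.of_nat m) in *. set (K := Z.of_nat k) in *.
    split.
    + assert (A : (IZR (2*M-1) * s5 <= IZR (4*K + (2*M-1)))%R).
      { zr. assert (B: (2*IZR M - 1 <= IZR K * (1 + s5))%R) by lra.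
        assert (C: ((2*IZR M - 1)*(s5-1) <= IZR K * (1 + s5) * (s5 - 1))%R)
          by (apply Rmult_le_compat_r; lra).
        assert (E: (IZR K * (1 + s5) * (s5 - 1) = IZR K * (s5*s5) - IZR K)%R) by ring.
        rewrite Hs in E. lra. }
      destruct A as [A|A]; [exact A|]. exfalso.
      replace (2*M-1) with (2*(M-1)+1) in A by ring. apply (irr (M-1) _ (eq_sym A)).
    + zr. assert (B: (IZR K * (1 + s5) < 2*IZR M + 1)%R) by lra.
      assert (C: (IZR K * (1 + s5) * (s5 - 1) < (2*IZR M + 1)*(s5-1))%R)
        by (apply Rmult_lt_compat_r; lra).
      assert (E: (IZR K * (1 + s5) * (s5 - 1) = IZR K * (s5*s5) - IZR K)%R) by ring.
      rewrite Hs in E. lra.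
  - intros [k [H1 H2]].
    set (M := Z.of_nat m) in *.
    assert (Hk : 0 <= k).
    { zr. assert (HM : (0 <= IZR M)%R) by (apply IZR_le; unfold M; lia).
      assert (Hk' : (-1 < IZR k)%R) by nra. apply lt_IZR in Hk'. lia. }
    exists (Z.to_nat k). rewrite !INR_IZR_INZ. rewrite Z2Nat.id by auto. fold M.
    zr. split.
    + assert (C: ((2*IZR M - 1)*(s5-1)*(s5+1) < 4 * IZR k * (s5+1))%R)
        by (apply Rmult_lt_compat_r; lra).
      assert (E: ((2*IZR M - 1)*(s5-1)*(s5+1) = (2*IZR M - 1)*(s5*s5) - (2*IZR M - 1))%R) by ring.
      rewrite Hs in E. lra.
    + assert (C: (4 * IZR k * (s5+1) < (2*IZR M + 1)*(s5-1)*(s5+1))%R)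
        by (apply Rmult_lt_compat_r; lra).
      assert (E: ((2*IZR M + 1)*(s5-1)*(s5+1) = (2*IZR M + 1)*(s5*s5) - (2*IZR M + 1))%R) by ring.
      rewrite Hs in E. lra.
Qed.

Lemma S0 : InS 0.
Proof. pose proof s5_bounds. exists 0. simpl. split; lra. Qed.
Lemma S1 : ~ InS 1.
Proof. pose proof s5_bounds. intro HS. apply (excl 1 HS). exists 0. simpl. split; lra. Qed.
Lemma S2 : InS 2.
Proof. pose proof s5_bounds. exists 1. simpl. split; lra. Qed.
Lemma S3 : InS 3.
Proof. pose proof s5_bounds. exists 2. simpl. split; lra. Qed.
Lemma S4 : ~ InS 4.
Proof. pose proof s5_bounds. intro HS. apply (excl 4 HS). exists 2. simpl. split; lra. Qed.

Lemma main_Z (m : nat) : occurs_exactly_twice m <-> ~ InS (Z.of_nat m).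
Proof.
  induction m as [m IH] using lt_wf_ind.
  destruct (le_lt_dec m 4) as [Hm|Hm].
  - destruct m as [|[|[|[|[|m]]]]]; try lia.
    + pose proof base0. pose proof S0. simpl. tauto.
    + pose proof base1. pose proof S1. simpl. tauto.
    + pose proof base2. pose proof S2. simpl. tauto.
    + pose proof base3. pose proof S3. simpl. tauto.
    + pose proof base4. pose proof S4. simpl. tauto.
  - destruct (jidx_spec (S m)) as [A B]; [lia|].
    set (j := jidx (S m)) in *.
    assert (Hj : (5 <= j)%nat).
    { destruct (le_lt_dec 5 j); auto. pose proof (fib_mono (S j) 5 ltac:(lia)).
      change (fib 5) with 5%nat in H. lia. }
    assert (Hmj : (fib j <= m < fib (S j))%nat) by lia.
    rewrite (ET_reflect j m Hj Hmj), (RS j m Hj Hmj).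
    apply IH.
    destruct j as [|j1]; [lia|].
    assert (fib (S (S j1)) = fib (S j1) + fib j1)%nat by reflexivity.
    pose proof (fib_lt_S j1 ltac:(lia)). lia.
Qed.

Close Scope Z_scope.

Theorem proposition3 :
  forall m : nat,
    occurs_exactly_twice m <-> ~ (exists k : nat, is_floor_phi_half m k).
Proof.
  intro m. rewrite real_conv. apply main_Z.
Qed.
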